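(* Let $2\leq k\leq d$, $\theta>0$, $v_1,\dots,v_k,w\in S^{d-1}$, and suppose $\Theta(\sigma(0,v_1,\dots,v_k))\geq\theta$. Then there exists $1\leq i\leq k$ such that $$\Theta(\sigma(0,v_1,\dots,v_{i-1},w,v_{i+1},\dots,v_k))\geq\frac{\theta}{k\,2^{k+1}}.$$
   Context: For $a_0,\dots,a_k\in\mathbb{R}^d$, $\sigma(a_0,\dots,a_k)=\operatorname{conv}\{a_0,\dots,a_k\}$, $|\sigma|$ denotes its $k$-dimensional volume, and for $\operatorname{diam}\sigma>0$ the fullness is $\Theta(\sigma)=|\sigma|/(\operatorname{diam}\sigma)^k$. $S^{d-1}$ is the unit sphere of $\mathbb{R}^d$. *)

(* Defs.v *)
From HB Require Import structures.
From mathcomp Require Import all_boot all_order all_algebra.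
Set Implicit Arguments. Unset Strict Implicit. Unset Printing Implicit Defensive.
Import Order.TTheory GRing.Theory Num.Theory.
Local Open Scope ring_scope.

Section Simplex.
Variables (R : rcfType) (d : nat).

Definition dotp (u v : 'rV[R]_d) : R := (u *m v^T) 0 0.
Definition enorm (u : 'rV[R]_d) : R := Num.sqrt (dotp u u).

(* A k-simplex sigma(a_0,...,a_k) given by its vertices a : 'I_k.+1 -> R^d. *)
Definition edge_mx (k : nat) (a : 'I_k.+1 -> 'rV[R]_d) : 'M[R]_(k, d) :=
  \matrix_(i < k, j < d) (a (lift ord0 i) 0 j - a ord0 0 j).

Definition svol (k : nat) (a : 'I_k.+1 -> 'rV[R]_d) : R :=
  Num.sqrt (\det (edge_mx a *m (edge_mx a)^T)) / (k`!)%:R.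

Definition sdiam (k : nat) (a : 'I_k.+1 -> 'rV[R]_d) : R :=
  \big[Num.max/0]_(i < k.+1) \big[Num.max/0]_(j < k.+1) enorm (a i - a j).

(* fullness Theta = |sigma| / (diam sigma)^k (meaningful when diam > 0). *)
Definition fullness (k : nat) (a : 'I_k.+1 -> 'rV[R]_d) : R :=
  svol a / (sdiam a) ^+ k.

Definition simplex0 (k : nat) (v : 'I_k -> 'rV[R]_d) : 'I_k.+1 -> 'rV[R]_d :=
  fun j => match unlift ord0 j with Some i => v i | None => 0 end.

Definition replace_at (k : nat) (v : 'I_k -> 'rV[R]_d) (i : 'I_k) (w : 'rV[R]_d)
  : 'I_k -> 'rV[R]_d := fun j => if j == i then w else v j.

End Simplex.

(* Main.v *)
Require Import Defs.
From HB Require Import structures.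
From mathcomp Require Import all_boot all_order all_algebra.
From mathcomp Require Import ring lra.
Import Order.TTheory GRing.Theory Num.Theory.
Local Open Scope ring_scope.

Section Aux.
Variable R : rcfType.

Lemma cofactor_eq n (A B : 'M[R]_n) i m :
  (forall j l, j != i -> l != m -> A j l = B j l) ->
  cofactor A i m = cofactor B i m.
Proof.
move=> H; rewrite /cofactor; congr (_ * _); congr (\det _).
by apply/matrixP => a b; rewrite !mxE; apply: H; rewrite eq_sym neq_lift.
Qed.

Lemma det_row_repl n (A B : 'M[R]_n) i :
  (forall j l, j != i -> A j l = B j l) ->
  \det A = \sum_j A i j * cofactor B i j.
Proof.
move=> H; rewrite (expand_det_row _ i); apply: eq_bigr => j _; congr (_ * _).
by apply: cofactor_eq => a b ha _; apply: H.
Qed.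

Lemma entry_delta m n (A : 'M[R]_(m, n)) j l :
  A j l = (delta_mx 0 j *m A *m delta_mx l 0 : 'M_1) 0 0.
Proof. by rewrite -rowE -colE !mxE. Qed.

Lemma quad_disc (a b c : R) :
  (forall t, 0 <= a - 2 * t * b + t ^+ 2 * c) -> 0 <= c -> b ^+ 2 <= a * c.
Proof.
move=> H; rewrite le_eqVlt => /orP [/eqP c0|c0].
  have [->|b0] := eqVneq b 0; first by rewrite -c0; lra.
  have := H ((a + 1) / (2 * b)); rewrite -c0.
  have -> : a - 2 * ((a + 1) / (2 * b)) * b + ((a + 1) / (2 * b)) ^+ 2 * 0 = -1.
    by field; rewrite b0.
  lra.
have := H (b / c).
have -> : a - 2 * (b / c) * b + (b / c) ^+ 2 * c = (a * c - b ^+ 2) / c.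
  by field; rewrite lt0r_neq0.
move=> h; have : 0 <= (a * c - b ^+ 2) / c * c by apply: mulr_ge0 => //; lra.
rewrite divfK ?lt0r_neq0 //; lra.
Qed.

Lemma dotE d (x y : 'rV[R]_d) : (x *m y^T) 0 0 = \sum_j x 0 j * y 0 j.
Proof. by rewrite !mxE; apply: eq_bigr => j _; rewrite !mxE. Qed.

Lemma dot_ge0 d (x : 'rV[R]_d) : 0 <= (x *m x^T) 0 0.
Proof. by rewrite dotE; apply: sumr_ge0 => j _; rewrite -expr2 sqr_ge0. Qed.

Lemma dotC d (x y : 'rV[R]_d) : (x *m y^T) 0 0 = (y *m x^T) 0 0.
Proof. by rewrite !dotE; apply: eq_bigr => j _; rewrite mulrC. Qed.

Lemma cs d (x y : 'rV[R]_d) :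
  ((x *m y^T) 0 0) ^+ 2 <= (x *m x^T) 0 0 * (y *m y^T) 0 0.
Proof.
apply: quad_disc; last exact: dot_ge0.
move=> t; rewrite !dotE.
have -> : \sum_j x 0 j * x 0 j - 2 * t * \sum_j x 0 j * y 0 j +
   t ^+ 2 * \sum_j y 0 j * y 0 j = \sum_j (x 0 j - t * y 0 j) ^+ 2.
  rewrite !mulr_sumr -sumrB -big_split; apply: eq_bigr => j _ /=; set p := x 0 j; set q := y 0 j; ring.
by apply: sumr_ge0 => j _; rewrite sqr_ge0.
Qed.


Lemma choose_i k (c : 'rV[R]_k) (t Q : R) : (0 < k)%N -> 0 <= t ->
  1 = Q + t -> Q <= k%:R * \sum_j c 0 j ^+ 2 ->
  exists i, 1 <= k%:R ^+ 2 * (c 0 i ^+ 2 + t).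
Proof.
move=> k0 t0 one bnd.
set S := \sum_j c 0 j ^+ 2 in bnd.
have K1 : 1 <= k%:R :> R by rewrite ler1n.
case: (pickP (fun i => 1 <= k%:R ^+ 2 * (c 0 i ^+ 2 + t))) => [i Hi|none].
  by exists i.
exfalso.
have : \sum_(i < k) k%:R ^+ 2 * (c 0 i ^+ 2 + t) < \sum_(i < k) (1 : R).
  apply: ltr_sum; first by apply/hasP; exists (Ordinal k0); rewrite ?mem_index_enum.
  by move=> i _; rewrite ltNge; apply/negbT; apply: none.
rewrite -mulr_sumr big_split /= -/S !sumr_const card_ord.
rewrite -mulr_natr => h.
set K := k%:R in K1 h bnd.
have a1 : K <= K * (K * S + t) by rewrite -{1}(mulr1 K) ler_wpM2l; lra.
have K2 : 1 <= K ^+ 2 by rewrite exprn_ege1.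
have a3 : 0 <= K * t * (K ^+ 2 - 1) by rewrite !mulr_ge0 //; lra.
have a2 : K * (K * S + t) <= K ^+ 2 * (S + t * K).
  rewrite -subr_ge0; have -> : K ^+ 2 * (S + t * K) - K * (K * S + t) = K * t * (K ^+ 2 - 1) by ring.
  done.
lra.
Qed.

Lemma det_repl k d (V : 'M[R]_(k, d)) (w : 'rV[R]_d) (c : 'rV[R]_k) (u : 'rV[R]_d) i :
  V *m u^T = 0 -> w = c *m V + u ->
  \det ((\matrix_(j, l) (if j == i then w 0 l else V j l)) *m
        (\matrix_(j, l) (if j == i then w 0 l else V j l))^T) =
  c 0 i ^+ 2 * \det (V *m V^T) + (u *m u^T) 0 0 * cofactor (V *m V^T) i i.
Proof.
move=> hu' hwd.
have hu : u *m V^T = 0 by have := congr1 trmx hu'; rewrite trmx_mul trmxK trmx0.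
set Vr := \matrix_(j, l) (if j == i then w 0 l else V j l).
set G := V *m V^T.
set t := (u *m u^T) 0 0.
set F := \matrix_(j, l) (if j == i then c 0 l else (j == l)%:R) : 'M[R]_k.
set B := delta_mx i (0 : 'I_1) *m u.
have hrowF : forall j, j != i -> row j F = delta_mx 0 j.
  by move=> j hj; apply/rowP => l; rewrite !mxE (negbTE hj) eq_sym.
have FM : forall M : 'M[R]_k, forall j l, j != i -> l != i -> (F *m M *m F^T) j l = M j l.
  move=> M j l hj hl.
  rewrite [LHS]entry_delta [RHS]entry_delta !mulmxA -rowE hrowF //.
  have hF : F^T *m (delta_mx 0 l)^T = (delta_mx 0 l)^T :> 'M[R]_(k, 1).
    by rewrite -trmx_mul -rowE hrowF.
  rewrite trmx_delta in hF.
  by rewrite -(mulmxA _ (F^T)) hF.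
have hrowFi : row i F = c by apply/rowP => l; rewrite !mxE eqxx.
have d00 : delta_mx 0 0 = 1%:M :> 'M[R]_1 by apply/matrixP => a b; rewrite !ord1 !mxE.
have hVr : Vr = F *m V + B.
  apply/row_matrixP => j; rewrite [row j (F *m V + B)]rowE mulmxDr mulmxA -rowE.
  rewrite /B mulmxA mul_delta_mx_cond.
  case: (eqVneq j i) => [->|hj].
    rewrite hrowFi mulr1n d00 mul1mx -hwd.
    by apply/rowP => l; rewrite !mxE eqxx.
  rewrite hrowF // mulr0n mul0mx addr0 -rowE.
  by apply/rowP => l; rewrite !mxE (negbTE hj).
have hG' : Vr *m Vr^T = F *m G *m F^T + t *: delta_mx i i.
  rewrite hVr linearD /= mulmxDl !mulmxDr /B !trmx_mul !mulmxA.
  rewrite -(mulmxA F V (u^T)) hu' mulmx0 !mul0mx addr0.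
  rewrite -(mulmxA _ u (V^T)) hu mulmx0 !mul0mx add0r.
  rewrite -(mulmxA F V (V^T)) -/G; congr (_ + _).
  rewrite -(mulmxA _ u (u^T)) [u *m u^T]mx11_scalar -/t mul_mx_scalar -scalemxAl.
  by rewrite trmx_delta mul_delta_mx.
have detF : \det F = c 0 i.
  rewrite (det_row_repl _ F 1%:M i); last first.
    by move=> j l hj; rewrite !mxE (negbTE hj).
  rewrite (bigD1 i) //= big1 ?addr0.
    have := @adj1 R k; move/matrixP => /(_ i i); rewrite !mxE eqxx => ->.
    by rewrite mulr1.
  move=> l hl; have := @adj1 R k; move/matrixP => /(_ l i); rewrite !mxE (negbTE hl) => ->.
  by rewrite mulr0.
have cofE : cofactor (F *m G *m F^T) i i = cofactor G i i.
  by apply: cofactor_eq => j l hj hl; apply: FM.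
have tdE : forall a b, (t *: delta_mx i i) a b = t * ((a == i) && (b == i))%:R.
  by move=> a b; rewrite !mxE.
rewrite hG' (det_row_repl _ _ (F *m G *m F^T) i); last first.
  by move=> j l hj; rewrite [LHS]mxE tdE (negbTE hj) mulr0 addr0.
rewrite (eq_bigr (fun l => (F *m G *m F^T) i l * cofactor (F *m G *m F^T) i l +
   t * (l == i)%:R * cofactor (F *m G *m F^T) i l)); last first.
  by move=> l _; rewrite [(F *m G *m F^T + t *: delta_mx i i) i l]mxE tdE eqxx mulrDl.
rewrite big_split /= -expand_det_row (bigD1 i) //= big1 ?addr0; last first.
  by move=> l hl; rewrite (negbTE hl) mulr0 mul0r.
rewrite !eqxx mulr1 cofE !det_mulmx det_tr detF; ring.
Qed.

Lemma cof_ge k d (V : 'M[R]_(k, d)) i :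
  (forall j, (row j V *m (row j V)^T) 0 0 = 1) -> 0 < \det (V *m V^T) ->
  \det (V *m V^T) <= cofactor (V *m V^T) i i.
Proof.
move=> hV dpos.
set G := V *m V^T.
have uG : G \in unitmx by rewrite unitmxE unitfE lt0r_neq0.
have Gsym : G^T = G by rewrite /G trmx_mul trmxK.
pose a := (delta_mx 0 i : 'rV[R]_k) *m invmx G *m V.
have d00 : delta_mx 0 0 = 1%:M :> 'M[R]_1 by apply/matrixP => x y; rewrite !ord1 !mxE.
have ax : (a *m (row i V)^T) 0 0 = 1.
  rewrite rowE trmx_mul /a -!mulmxA (mulmxA V) -/G mulKmx //.
  by rewrite trmx_delta mul_delta_mx d00 mxE.
have aa : (a *m a^T) 0 0 = invmx G i i.
  rewrite /a !trmx_mul -!mulmxA (mulmxA V) -/G mulKmx //.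
  by rewrite trmx_inv Gsym trmx_delta mulmxA -entry_delta.
have h1 : 1 <= invmx G i i.
  by have := cs _ a (row i V); rewrite ax aa hV expr1n mulr1 //.
move: h1; rewrite /invmx uG !mxE => h1.
have := ler_wpM2l (ltW dpos) h1; by rewrite mulr1 mulrA mulfV ?lt0r_neq0 // mul1r.
Qed.


Lemma key k d (V : 'M[R]_(k, d)) (w : 'rV[R]_d) :
  (0 < k)%N ->
  (forall j, (row j V *m (row j V)^T) 0 0 = 1) ->
  (w *m w^T) 0 0 = 1 ->
  0 < \det (V *m V^T) ->
  exists i : 'I_k, \det (V *m V^T) <= k%:R ^+ 2 *
     \det ((\matrix_(j, l) (if j == i then w 0 l else V j l)) *m
           (\matrix_(j, l) (if j == i then w 0 l else V j l))^T).
Proof.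
move=> k0 hV hw dpos.
set G := V *m V^T.
have uG : G \in unitmx by rewrite unitmxE unitfE lt0r_neq0.
have Gsym : G^T = G by rewrite /G trmx_mul trmxK.
set c := w *m V^T *m invmx G.
set u := w - c *m V.
have hu : u *m V^T = 0 by rewrite /u mulmxBl -(mulmxA c) -/G /c mulmxKV // subrr.
have hu' : V *m u^T = 0 by have := congr1 trmx hu; rewrite trmx_mul trmxK trmx0.
set t := (u *m u^T) 0 0.
have t0 : 0 <= t := dot_ge0 _ u.
have hwd : w = c *m V + u by rewrite /u addrC subrK.
have one : 1 = (c *m G *m c^T) 0 0 + t.
  rewrite -hw /t; have -> : w *m w^T = c *m G *m c^T + u *m u^T.
    rewrite {1 2}hwd linearD /= mulmxDl !mulmxDr (trmx_mul c V).
    rewrite -(mulmxA c V (u^T)) hu' mulmx0 (mulmxA u) hu mul0mx addr0 add0r.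
    by rewrite (mulmxA (c *m V)) -(mulmxA c V) -/G.
  by rewrite mxE.
have Gjl : forall j l, G j l = (row j V *m (row l V)^T) 0 0.
  by move=> j l; rewrite !mxE; apply: eq_bigr => a _; rewrite !mxE.
have G1 : forall j l, G j l ^+ 2 <= 1.
  by move=> j l; rewrite Gjl; apply: le_trans (cs _ _ _) _; rewrite !hV mulr1.
set S := \sum_j c 0 j ^+ 2.
have bnd : (c *m G *m c^T) 0 0 <= k%:R * S.
  rewrite dotE.
  have -> : \sum_l (c *m G) 0 l * c 0 l = \sum_l \sum_j c 0 j * G j l * c 0 l.
    by apply: eq_bigr => l _; rewrite mxE mulr_suml.
  apply: (@le_trans _ _ (\sum_(l < k) \sum_(j < k) ((c 0 j ^+ 2 + c 0 l ^+ 2) / 2))).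
    apply: ler_sum => l _; apply: ler_sum => j _.
    have := G1 j l; set g := G j l; set x := c 0 j; set y := c 0 l => hg.
    have : 0 <= (x - g * y) ^+ 2 + (1 - g ^+ 2) * y ^+ 2.
      by apply: addr_ge0; [exact: sqr_ge0 | apply: mulr_ge0; [lra | exact: sqr_ge0]].
    lra.
  have -> : \sum_(l < k) \sum_(j < k) ((c 0 j ^+ 2 + c 0 l ^+ 2) / 2) =
     \sum_(l < k) \sum_(j < k) (c 0 j ^+ 2 / 2) + \sum_(l < k) \sum_(j < k) (c 0 l ^+ 2 / 2).
    rewrite -big_split; apply: eq_bigr => l _ /=; rewrite -big_split.
    by apply: eq_bigr => j _; rewrite mulrDl.
  rewrite [X in _ + X]exchange_big /=.
  rewrite -!mulr_suml -/S sumr_const card_ord -mulr_natr; lra.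
have [i Hi] := choose_i _ _ _ _ k0 t0 one bnd.
exists i.
rewrite (det_repl _ _ _ _ _ _ i hu' hwd) -/G -/t.
have hc := cof_ge _ _ _ i hV dpos; rewrite -/G in hc.
have h1 : (c 0 i ^+ 2 + t) * \det G <= c 0 i ^+ 2 * \det G + t * cofactor G i i.
  by rewrite mulrDl lerD2l ler_wpM2l.
have h2 : \det G <= k%:R ^+ 2 * (c 0 i ^+ 2 + t) * \det G.
  by rewrite -{1}(mul1r (\det G)) ler_wpM2r // ltW.
apply: le_trans h2 _; rewrite -mulrA; apply: ler_wpM2l => //.
by rewrite exprn_ge0.
Qed.

Lemma final_ineq (k : nat) (theta D D' K F s s' : R) :
  0 < theta -> 1 <= K -> 0 < F -> 1 <= s -> 1 <= s' -> s' <= 2 ->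
  0 <= D -> D <= K ^+ 2 * D' -> theta <= Num.sqrt D / F / s ^+ k ->
  theta / (K * 2 ^+ k.+1) <= Num.sqrt D' / F / s' ^+ k.
Proof.
move=> th0 K1 F0 s1 s1' s2' D0 DD hth.
have K0 : 0 < K by lra.
have K20 : 0 < K ^+ 2 by rewrite exprn_gt0.
have D'0 : 0 <= D'.
  have h : 0 <= K ^+ 2 * D' by lra.
  by rewrite pmulr_rge0 in h.
set q := Num.sqrt D'; set Q := Num.sqrt D.
have q0 : 0 <= q by apply: sqrtr_ge0.
have Qq : Q <= K * q.
  have : Q <= Num.sqrt (K ^+ 2 * D') by rewrite /Q ler_sqrt // mulr_ge0 // ltW.
  by rewrite sqrtrM ?sqr_ge0 // sqrtr_sqr ger0_norm // ltW.
have sk : 1 <= s ^+ k by rewrite exprn_ege1.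
have sk1 : 1 <= s' ^+ k by rewrite exprn_ege1.
have sk2 : s' ^+ k <= 2 ^+ k by apply: lerXn2r; rewrite ?nnegrE; lra.
set P := 2 ^+ k : R.
have P0 : 0 < P by rewrite exprn_gt0.
have thF : theta * F <= Q.
  move: hth; rewrite ler_pdivlMr ?(lt_le_trans ltr01) // ler_pdivlMr //.
  move=> h; apply: le_trans h; rewrite mulrAC.
  by rewrite -{1}(mulr1 (theta * F)) ler_wpM2l // mulr_ge0 // ltW.
rewrite exprS -/P ler_pdivlMr ?(lt_le_trans ltr01) // ler_pdivlMr //.
have -> : theta / (K * (2 * P)) * s' ^+ k * F = (theta * F * s' ^+ k) / (K * (2 * P)).
  by field; rewrite !lt0r_neq0.
rewrite ler_pdivrMr ?mulr_gt0 //.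
have e1 : theta * F * s' ^+ k <= theta * F * P by rewrite ler_wpM2l // mulr_ge0 // ltW.
have e2 : theta * F * P <= K * q * P by apply: ler_wpM2r; [exact: ltW | lra].
have e3 : K * q * P <= q * (K * (2 * P)).
  have : 0 <= K * q * P by rewrite !mulr_ge0 // ltW.
  have -> : q * (K * (2 * P)) = 2 * (K * q * P) by ring.
  lra.
lra.
Qed.

Lemma dot1 d (x : 'rV[R]_d) : enorm x = 1 -> (x *m x^T) 0 0 = 1.
Proof.
rewrite /enorm /dotp => h.
by rewrite -(sqr_sqrtr (dot_ge0 _ x)) h expr1n.
Qed.

Lemma enorm_le2 d (x y : 'rV[R]_d) :
  (x *m x^T) 0 0 <= 1 -> (y *m y^T) 0 0 <= 1 -> enorm (x - y) <= 2.
Proof.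
move=> hx hy.
have h4 : dotp (x - y) (x - y) <= 4.
  rewrite /dotp dotE.
  apply: (@le_trans _ _ (\sum_j (2 * (x 0 j * x 0 j) + 2 * (y 0 j * y 0 j)))).
    apply: ler_sum => j _; rewrite !mxE.
    have : 0 <= (x 0 j + y 0 j) ^+ 2 by apply: sqr_ge0.
    set p := x 0 j; set q := y 0 j; move=> h.
    have -> : (p - q) * (p - q) = 2 * (p * p) + 2 * (q * q) - (p + q) ^+ 2 by ring.
    lra.
  rewrite big_split /= -!mulr_sumr -!dotE; lra.
rewrite /enorm; apply: (@le_trans _ _ (Num.sqrt 4)).
  by rewrite ler_sqrt.
have -> : (4 : R) = 2 ^+ 2 by rewrite expr2; lra.
by rewrite sqrtr_sqr ger0_norm.
Qed.

Lemma sdiam_le2 d k (a : 'I_k.+1 -> 'rV[R]_d) :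
  (forall j, (a j *m (a j)^T) 0 0 <= 1) -> sdiam a <= 2.
Proof.
move=> ha; rewrite /sdiam.
apply: (big_ind (fun x => x <= 2)); first lra.
  by move=> x y hx hy; rewrite ge_max hx hy.
move=> i _; apply: (big_ind (fun x => x <= 2)); first lra.
  by move=> x y hx hy; rewrite ge_max hx hy.
by move=> j _; apply: enorm_le2.
Qed.

Lemma sdiam_ge d k (a : 'I_k.+1 -> 'rV[R]_d) i j :
  enorm (a i - a j) <= sdiam a.
Proof.
rewrite /sdiam (bigD1 i) //= le_max; apply/orP; left.
by rewrite (bigD1 j) //= le_max lexx.
Qed.

End Aux.

Theorem lemma3p6 (R : rcfType) (d k : nat) (theta : R)
  (v : 'I_k -> 'rV[R]_d) (w : 'rV[R]_d) :
  (2 <= k)%N -> (k <= d)%N -> 0 < theta ->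
  (forall i, enorm (v i) = 1) -> enorm w = 1 ->
  theta <= fullness (simplex0 v) ->
  exists i : 'I_k,
    theta / (k%:R * 2 ^+ k.+1) <= fullness (simplex0 (replace_at v i w)).
Proof.
move=> k2 kd th0 hv hw hth.
have k0 : (0 < k)%N := leq_trans (isT : (0 < 2)%N) k2.
set V := \matrix_(j, l) v j 0 l : 'M[R]_(k, d).
have EV : edge_mx (simplex0 v) = V.
  by apply/matrixP => j l; rewrite !mxE /simplex0 liftK unlift_none !mxE subr0.
have rowV : forall j, row j V = v j by move=> j; apply/rowP => l; rewrite !mxE.
have EVr : forall i, edge_mx (simplex0 (replace_at v i w)) =
    \matrix_(j, l) (if j == i then w 0 l else V j l).
  move=> i; apply/matrixP => j l; rewrite !mxE /simplex0 liftK unlift_none !mxE subr0.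
  by rewrite /replace_at; case: (j == i).
have hV1 : forall j, (row j V *m (row j V)^T) 0 0 = 1.
  by move=> j; rewrite rowV; apply: dot1; apply: hv.
have hw1 := @dot1 R d w hw.
have le1 : forall (u : 'I_k -> 'rV[R]_d), (forall j, enorm (u j) = 1) ->
    forall j, (simplex0 u j *m (simplex0 u j)^T) 0 0 <= 1.
  move=> u hu j; rewrite /simplex0; case: (unlift ord0 j) => [a|].
    by rewrite (@dot1 R d (u a) (hu a)).
  by rewrite mul0mx mxE.
have ge1 : forall (u : 'I_k -> 'rV[R]_d), (forall j, enorm (u j) = 1) ->
    1 <= sdiam (simplex0 u).
  move=> u hu; apply: le_trans (@sdiam_ge R d k _ (lift ord0 (Ordinal k0)) ord0).
  by rewrite /simplex0 liftK unlift_none subr0 hu.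
have hrep : forall i j, enorm (replace_at v i w j) = 1.
  by move=> i j; rewrite /replace_at; case: (j == i).
set D := \det (V *m V^T).
have D0 : 0 < D.
  rewrite ltNge; apply/negP => hD.
  have sq : Num.sqrt D = 0 by apply/eqP; rewrite sqrtr_eq0.
  move: hth; rewrite /fullness /svol EV -/D sq !mul0r; lra.
have [i Hi] := @key R k d V w k0 hV1 hw1 D0.
exists i.
rewrite /fullness /svol EVr.
apply: (@final_ineq R k theta D _ _ _ (sdiam (simplex0 v))) => //.
- by rewrite ler1n.
- by rewrite ltr0n fact_gt0.
- exact: ge1.
- exact: ge1.
- by apply: sdiam_le2; apply: le1.
- exact: ltW.
- by move: hth; rewrite /fullness /svol EV.
Qed.
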